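(* Let $a\in(0,\infty)$, $\psi:[0,a]\to\mathbb{R}$, and $0=a_0<a_1<\dots<a_M=a$ a partition such that for each $m$ the restriction $\psi|_{A_m}$ of $\psi$ to $A_m=(a_{m-1},a_m)$ is continuous and strictly monotonic; let $R_m=\psi|_{A_m}(A_m)$. Let $W\sim\mathcal{U}(0,a)$. Then for all $x\in\mathbb{R}$, $$F_{\psi(W)}(x)=\frac1a\Big\{\sum_{m\in I_x}\big(\psi|_{A_m}^{-1}(x)-a_{m-1}\big)+\sum_{m\in D_x}\big(a_m-\psi|_{A_m}^{-1}(x)\big)+\sum_{m\in O_x}(a_m-a_{m-1})\Big\},$$ where $I_x=\{m:\psi|_{A_m}\text{ is increasing and }x\in R_m\}$, $D_x=\{m:\psi|_{A_m}\text{ is decreasing and }x\in R_m\}$, and $O_x=\{m:x\notin R_m,\ R_m\subset(-\infty,x]\}$.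
   Context: $F_{\psi(W)}$ denotes the distribution function of $\psi(W)$. *)

(* Defs.v *)
From HB Require Import structures.
From mathcomp Require Import all_boot all_order all_algebra.
From mathcomp Require Import all_classical all_reals all_analysis.
Set Implicit Arguments. Unset Strict Implicit. Unset Printing Implicit Defensive.
Import Order.TTheory GRing.Theory Num.Theory.
Local Open Scope classical_set_scope.
Local Open Scope ring_scope.

Definition piece (R : realType) (s : nat -> R) (m : nat) : set R :=
  `]s m.-1, s m[%classic.

Definition strinc_on (R : realType) (psi : R -> R) (A : set R) : Prop :=
  forall u v, A u -> A v -> u < v -> psi u < psi v.
Definition strdec_on (R : realType) (psi : R -> R) (A : set R) : Prop :=
  forall u v, A u -> A v -> u < v -> psi v < psi u.

(* (psi|_A)^{-1}(x): the (unique, when psi is injective on A and x \in psi @` A)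
   point y of A with psi y = x; an arbitrary value (0) otherwise. *)
Definition restr_inv (R : realType) (psi : R -> R) (A : set R) (x : R) : R :=
  xget 0 [set y | A y /\ psi y = x].

(* Main.v *)
Require Import Defs.
From HB Require Import structures.
From mathcomp Require Import all_boot all_order all_algebra.
From mathcomp Require Import all_classical all_reals all_analysis.
From mathcomp Require Import lra.
Import Order.TTheory GRing.Theory Num.Theory numFieldTopology.Exports.
Local Open Scope classical_set_scope.
Local Open Scope ring_scope.
Section Piece.
Context (R : realType) (psi : R -> R) (u v x : R) (uv : u < v)
  (cont : {within `]u, v[%classic, continuous psi})
  (mono : strinc_on psi `]u, v[%classic \/ strdec_on psi `]u, v[%classic).

Let A : set R := `]u, v[%classic.

Lemma not_both : ~ (strinc_on psi A /\ strdec_on psi A).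
Proof.
move=> [hi hd].
have h1 : A ((u + v) / 2).
  rewrite /A /= in_itv /=; apply/andP; split.
  by have : u < (u + v) / 2 by move: uv; lra.
  by have : (u + v) / 2 < v by move: uv; lra.
have h2 : A (((u + v) / 2 + v) / 2).
  rewrite /A /= in_itv /=; apply/andP; split.
  by have : u < ((u + v) / 2 + v) / 2 by move: uv; lra.
  by have : ((u + v) / 2 + v) / 2 < v by move: uv; lra.
have h12 : (u + v) / 2 < ((u + v) / 2 + v) / 2 by move: uv; lra.
have := hi _ _ h1 h2 h12; have := hd _ _ h1 h2 h12.
move=> p q; have := lt_trans p q; by rewrite ltxx.
Qed.

Definition Epiece : set R := [set y | A y /\ psi y <= x].

Definition ptval : R :=
  (if `[< strinc_on psi A /\ (psi @` A) x >] then restr_inv psi A x - u else 0)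
  + (if `[< strdec_on psi A /\ (psi @` A) x >] then v - restr_inv psi A x else 0)
  + (if `[< ~ (psi @` A) x /\ (psi @` A) `<=` [set y | y <= x] >] then v - u else 0).

Lemma ivt_piece y0 y1 : A y0 -> A y1 -> x < psi y0 -> psi y1 < x -> (psi @` A) x.
Proof.
move=> Ay0 Ay1 h0 h1.
have key : forall p q, A p -> A q -> p <= q ->
   Num.min (psi p) (psi q) <= x <= Num.max (psi p) (psi q) -> (psi @` A) x.
  move=> p q Ap Aq pq hx.
  have sub : `[p, q]%classic `<=` A.
    move=> z /=; rewrite in_itv /= => /andP[pz zq].
    move: Ap Aq; rewrite /A /= !in_itv /= => /andP[up _] /andP[_ qv].
    by apply/andP; split; [exact: lt_le_trans pz|exact: le_lt_trans qv].
  have [c cpq psic] := IVT pq (continuous_subspaceW sub cont) hx.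
  by exists c => //; apply: sub.
have hx0 : Num.min (psi y0) (psi y1) <= x <= Num.max (psi y0) (psi y1).
  by rewrite ge_min le_max (ltW h1) (ltW h0) orbT.
have hx1 : Num.min (psi y1) (psi y0) <= x <= Num.max (psi y1) (psi y0).
  by rewrite ge_min le_max (ltW h1) (ltW h0) orbT.
have [y01|y10] := leP y0 y1; first exact: key y01 hx0.
exact: key (ltW y10) hx1.
Qed.

Lemma Epiece_measure : measurable Epiece /\ lebesgue_measure Epiece = ptval%:E.
Proof.
have Auv : forall y, A y = (u < y < v) by move=> y; rewrite /A /= in_itv.
have [hI|nI] := pselect (strinc_on psi A /\ (psi @` A) x).
  have [Ac psic] : A (restr_inv psi A x) /\ psi (restr_inv psi A x) = x.
    apply: (@xgetPex _ 0 [set y | A y /\ psi y = x]).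
    by case: hI => _ [y Ay <-]; exists y.
  set c := restr_inv psi A x in Ac psic *.
  have nD : ~ (strdec_on psi A /\ (psi @` A) x).
    by move=> [hd _]; apply: not_both; split => //; case: hI.
  have nO : ~ (~ (psi @` A) x /\ (psi @` A) `<=` [set y | y <= x]).
    by move=> [] []; case: hI.
  have -> : ptval = c - u by rewrite /ptval asboolT// asboolF// asboolF// !addr0.
  have -> : Epiece = `]u, c]%classic.
    apply/seteqP; split => y /=.
      move=> [Ay py]; rewrite in_itv /=; apply/andP; split.
        by move: Ay; rewrite Auv => /andP[].
      rewrite leNgt; apply/negP => cy.
      have := hI.1 _ _ Ac Ay cy; rewrite psic => /(le_lt_trans py).
      by rewrite ltxx.
    rewrite in_itv /= => /andP[uy yc].
    have Ay : A y.
      rewrite Auv uy /=; apply: le_lt_trans yc _.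
      by move: Ac; rewrite Auv => /andP[].
    split => //; move: yc; rewrite le_eqVlt => /predU1P[->|yc].
      by rewrite psic.
    by rewrite -psic; apply: ltW; apply: hI.1.
  split; first exact: measurable_itv.
  rewrite lebesgue_measure_itv /= lte_fin.
  have uc : u < c by move: Ac; rewrite Auv => /andP[].
  by rewrite uc -EFinD.
have [hD|nD] := pselect (strdec_on psi A /\ (psi @` A) x).
  have [Ac psic] : A (restr_inv psi A x) /\ psi (restr_inv psi A x) = x.
    apply: (@xgetPex _ 0 [set y | A y /\ psi y = x]).
    by case: hD => _ [y Ay <-]; exists y.
  set c := restr_inv psi A x in Ac psic *.
  have nO : ~ (~ (psi @` A) x /\ (psi @` A) `<=` [set y | y <= x]).
    by move=> [] []; case: hD.
  have -> : ptval = v - c by rewrite /ptval asboolF// asboolT// asboolF// add0r addr0.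
  have -> : Epiece = `[c, v[%classic.
    apply/seteqP; split => y /=.
      move=> [Ay py]; rewrite in_itv /=; apply/andP; split; last first.
        by move: Ay; rewrite Auv => /andP[].
      rewrite leNgt; apply/negP => yc.
      have := hD.1 _ _ Ay Ac yc; rewrite psic => /(le_lt_trans py).
      by rewrite ltxx.
    rewrite in_itv /= => /andP[cy yv].
    have Ay : A y.
      rewrite Auv yv andbT; apply: lt_le_trans cy.
      by move: Ac; rewrite Auv => /andP[].
    split => //; move: cy; rewrite le_eqVlt => /predU1P[<-|cy].
      by rewrite psic.
    by rewrite -psic; apply: ltW; apply: hD.1.
  split; first exact: measurable_itv.
  rewrite lebesgue_measure_itv /= lte_fin.
  have cv : c < v by move: Ac; rewrite Auv => /andP[].
  by rewrite cv -EFinD.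
have nim : ~ (psi @` A) x.
  move=> im; case: mono => h; [apply: nI|apply: nD]; by split.
have [hO|nO] := pselect ((psi @` A) `<=` [set y | y <= x]).
  have -> : ptval = v - u.
    by rewrite /ptval asboolF// asboolF// asboolT// add0r add0r.
  have -> : Epiece = `]u, v[%classic.
    apply/seteqP; split => y /=; first by case.
    move=> Ay; split => //; apply: hO; by exists y.
  split; first exact: measurable_itv.
  by rewrite lebesgue_measure_itv /= lte_fin uv -EFinD.
have -> : ptval = 0.
  rewrite /ptval asboolF// asboolF// asboolF; first by rewrite !addr0.
  by case.
have [y0 Ay0 hy0] : exists2 y0, A y0 & x < psi y0.
  case: (pselect (exists2 y0, A y0 & x < psi y0)) => // h; exfalso.
  apply: nO => _ [y Ay <-]; rewrite /= leNgt; apply/negP => hy.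
  by apply: h; exists y.
have -> : Epiece = set0.
  apply/seteqP; split => y //= [Ay py].
  move: py; rewrite le_eqVlt => /predU1P[py|py].
    by apply: nim; exists y.
  by apply: nim; exact: (@ivt_piece _ _ Ay0 Ay hy0 py).
by split; [exact: measurable0|rewrite measure0].
Qed.

End Piece.
Lemma s_mono (R : realType) (s : nat -> R) (M : nat)
  (s_incr : forall m : nat, (0 < m <= M)%N -> s m.-1 < s m) i j :
  (i <= j <= M)%N -> s i <= s j.
Proof.
elim: j => [|j IH]; first by rewrite leqn0 => /andP[/eqP -> _].
move=> /andP[]; rewrite leq_eqVlt => /predU1P[-> //|ij jM].
apply: le_trans (IH _) (ltW (s_incr j.+1 _)); first by rewrite -ltnS ij ltnW.
by rewrite jM.
Qed.

Lemma s_cover (R : realType) (s : nat -> R) (M : nat) y :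
  s 0%N <= y <= s M ->
  (exists k, (k <= M)%N /\ y = s k) \/ (exists m, (0 < m <= M)%N /\ piece s m y).
Proof.
move=> /andP[y0 yM].
suff H : forall k, (k <= M)%N ->
  (exists k, (k <= M)%N /\ y = s k) \/ (exists m, (0 < m <= M)%N /\ piece s m y)
  \/ s k <= y.
  case: (H M (leqnn M)) => [h|[h|My]]; [by left|by right|left; exists M; split => //].
  by apply/eqP; rewrite eq_le yM My.
elim => [_|k IH kM]; first by right; right.
case: (IH (ltnW kM)) => [h|[h|ky]]; [by left|by right; left|].
have [yk|ky1] := ltP y (s k.+1); last by right; right.
move: ky; rewrite le_eqVlt => /predU1P[yk'|ky].
  by left; exists k; split; [exact: ltnW|].
right; left; exists k.+1; split; first by rewrite kM.
by rewrite /piece /= in_itv /= ky yk.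
Qed.

Lemma piece_disj (R : realType) (s : nat -> R) (M : nat)
  (s_incr : forall m : nat, (0 < m <= M)%N -> s m.-1 < s m) m n y :
  (0 < m <= M)%N -> (0 < n <= M)%N -> piece s m y -> piece s n y -> m = n.
Proof.
wlog: m n / (m <= n)%N.
  move=> H hm hn pm pn; have [mn|nm] := leqP m n; first exact: H.
  by apply/esym; apply: H => //; exact: ltnW.
move=> mn /andP[m0 mM] /andP[n0 nM]; rewrite /piece /= !in_itv /=.
move=> /andP[_ ym] /andP[yn _].
apply/eqP; rewrite eqn_leq mn /=; rewrite leqNgt; apply/negP => lt_mn.
have : s m <= s n.-1 by apply: (@s_mono _ _ _ s_incr m n.-1); rewrite -ltnS prednK // lt_mn /= (leq_trans (leq_pred n) nM).
move=> h; have := lt_trans (le_lt_trans h yn) ym; by rewrite ltxx.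
Qed.

Lemma null_bigsetU (R : realType) (G : nat -> set R) n :
  (forall k, measurable (G k)) -> (forall k, lebesgue_measure (G k) = 0%E) ->
  lebesgue_measure (\big[setU/set0]_(k < n) G k) = 0%E.
Proof.
move=> mG G0; elim: n => [|n IH]; first by rewrite big_ord0 measure0.
rewrite big_ord_recr /= null_set_setU //.
- by apply: bigsetU_measurable => k _; exact: mG.
- exact: mG.
- exact: G0.

Qed.
Theorem propositionA2 (R : realType) (a : R) (a_pos : 0 < a)
  (psi : R -> R) (M : nat) (s : nat -> R)
  (M_pos : (0 < M)%N)
  (s0 : s 0%N = 0) (sM : s M = a)
  (s_incr : forall m : nat, (0 < m <= M)%N -> s m.-1 < s m)
  (psi_cont : forall m : nat, (0 < m <= M)%N ->
     {within piece s m, continuous psi})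
  (psi_mono : forall m : nat, (0 < m <= M)%N ->
     strinc_on psi (piece s m) \/ strdec_on psi (piece s m))
  (d : measure_display) (T : measurableType d) (P : probability T R)
  (W : {RV P >-> R})
  (W_unif : forall A : set R, measurable A ->
     distribution P W A = uniform_prob a_pos A)
  (x : R) :
  P [set t | 0 <= W t <= a /\ psi (W t) <= x] =
  ((a^-1 *
    (\sum_(1 <= m < M.+1 |
            `[< strinc_on psi (piece s m) /\ (psi @` piece s m) x >])
        (restr_inv psi (piece s m) x - s m.-1)
     + \sum_(1 <= m < M.+1 |
            `[< strdec_on psi (piece s m) /\ (psi @` piece s m) x >])
        (s m - restr_inv psi (piece s m) x)
     + \sum_(1 <= m < M.+1 |
            `[< ~ (psi @` piece s m) x /\
                (psi @` piece s m) `<=` [set y | y <= x] >])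
        (s m - s m.-1)))%:E)%E.

Proof.
set E := [set y : R | 0 <= y <= a /\ psi y <= x].
pose F k := if (0 < k <= M)%N then Epiece R psi (s k.-1) (s k) x else set0.
pose G k := if pselect (E (s k)) then [set s k] else set0.
have pc : forall k, (0 < k <= M)%N ->
    measurable (Epiece R psi (s k.-1) (s k) x) /\
    lebesgue_measure (Epiece R psi (s k.-1) (s k) x) =
      (ptval R psi (s k.-1) (s k) x)%:E.
  by move=> k hk; exact: Epiece_measure (s_incr k hk) (psi_cont k hk) (psi_mono k hk).
have mF : forall k, measurable (F k).
  by move=> k; rewrite /F; case: ifP => hk; [exact: (pc k hk).1|exact: measurable0].
have mG : forall k, measurable (G k).
  by move=> k; rewrite /G; destruct (pselect (E (s k))); [exact: measurable_set1|exact: measurable0].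
have G0 : forall k, lebesgue_measure (G k) = 0%E.
  by move=> k; rewrite /G; destruct (pselect (E (s k))); [exact: lebesgue_measure_set1|exact: measure0].
have tF : trivIset setT F.
  move=> i j _ _ [y []]; rewrite /F.
  case: ifP => hi; last by case.
  case: ifP => hj; last by move=> _ [].
  move=> [pi _] [pj _]; exact: (@piece_disj _ _ _ s_incr _ _ y hi hj pi pj).
have sbnd : forall k, (0 < k <= M)%N -> 0 <= s k.-1 /\ s k <= a.
  move=> k /andP[k0 kM]; split.
    by rewrite -s0; apply: (@s_mono _ _ _ s_incr 0 k.-1); rewrite leq0n /= (leq_trans (leq_pred k) kM).
  by rewrite -sM; apply: (@s_mono _ _ _ s_incr k M); rewrite kM leqnn.
have hE : E = (\big[setU/set0]_(k < M.+1) F k) `|` (\big[setU/set0]_(k < M.+1) G k).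
  rewrite -!bigcup_mkord; apply/seteqP; split => y.
    move=> Ey; have [/andP[y0 ya] py] := Ey.
    have yb : s 0%N <= y <= s M by rewrite s0 sM y0 ya.
    have [[k [kM yk]]|[m [mM pm]]] := @s_cover R s M y yb.
      right; exists k; first by rewrite /= ltnS.
      rewrite /G; destruct (pselect (E (s k))) as [e|nEk]; first by rewrite yk.
      by exfalso; apply: nEk; rewrite -yk.
    left; exists m; first by rewrite /= ltnS; case/andP: mM.
    by rewrite /F mM; split.
  case => [[k _ Fk]|[k _ Gk]].
    move: Fk; rewrite /F; case: ifP => hk; last by case.
    move=> [pk pyx]; split => //.
    have [b1 b2] := sbnd k hk.
    move: pk; rewrite /= in_itv /= => /andP[h1 h2].
    apply/andP; split; [exact: (le_trans b1 (ltW h1))|exact: (le_trans (ltW h2) b2)].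
  move: Gk; rewrite /G; destruct (pselect (E (s k))) as [Ek|Ek]; last by case.
  by move=> /= ->.
have mU : measurable (\big[setU/set0]_(k < M.+1) F k).
  by apply: bigsetU_measurable => k _; exact: mF.
have mZ : measurable (\big[setU/set0]_(k < M.+1) G k).
  by apply: bigsetU_measurable => k _; exact: mG.
have mE : measurable E by rewrite hE; exact: measurableU.
have lamE : lebesgue_measure E =
    (\sum_(1 <= k < M.+1) ptval R psi (s k.-1) (s k) x)%:E.
  rewrite hE measureU0 //; last exact: null_bigsetU.
  rewrite (@measure_bigsetU _ _ _ lebesgue_measure F mF tF M.+1).
  rewrite -(big_mkord xpredT (fun k => lebesgue_measure (F k))).
  rewrite big_ltn // {1}/F /= measure0 add0e -sumEFin.
  apply: eq_big_nat => k /andP[k1 kM].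
  have hk : (0 < k <= M)%N by rewrite k1 -ltnS.
  by rewrite /F hk (pc k hk).2.
have -> : P [set t | 0 <= W t <= a /\ psi (W t) <= x] = distribution P W E by [].
rewrite W_unif // /uniform_prob.
rewrite (eq_integral (cst ((a - 0)^-1)%:E)); last first.
  move=> y; rewrite inE => -[yb _]; by rewrite /uniform_pdf /= yb.
rewrite integral_cst //.
rewrite (_ : (_ * _)%E = (((a - 0)^-1)%:E * (\sum_(1 <= k < M.+1) ptval R psi (s k.-1) (s k) x)%:E)%E); last first.
  by congr (_ * _)%E; exact: lamE.
rewrite subr0 -EFinM.
congr (_ * _)%:E.
rewrite [X in _ = X + _ + _]big_mkcond [X in _ = _ + X + _]big_mkcond [X in _ = _ + X]big_mkcond -!big_split /=.
by apply: eq_bigr => k _; rewrite /ptval /piece.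
Qed.
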